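(* Let $X_\ell$ be one of the affine types listed in the context and let $p:\{0,1,\dots,k-1\}\to I$ be a type $X_\ell$ path of length $k$. If $k>1$, then there is a unique directed walk in $B^{1,1}$ corresponding to $p$ (i.e. a unique sequence of $k$ consecutive arrows whose $t$-th arrow has color $p(t)$ for each $t$).
   Context: $I=\{0,1,\dots,\ell\}$ indexes the Dynkin nodes of the affine type $X_\ell$, one of $A^{(1)}_\ell$ ($\ell\ge2$), $C^{(1)}_\ell$ ($\ell\ge2$), $A^{(2)}_{2\ell}$ ($\ell\ge2$), $A^{(2)\dagger}_{2\ell}$ ($\ell\ge2$), $D^{(2)}_{\ell+1}$ ($\ell\ge2$), $D^{(1)}_\ell$ ($\ell\ge4$), $B^{(1)}_\ell$ ($\ell\ge3$), $A^{(2)}_{2\ell-1}$ ($\ell\ge3$). The Kirillov–Reshetikhin crystal $B^{1,1}$ of type $X_\ell$ is the following $I$-colored directed graph: $A^{(1)}_\ell$: a directed cycle with $\ell+1$ nodes whose successive arrows have colors $1,2,\dots,\ell,0$; $C^{(1)}_\ell$: directed cycle with $2\ell$ nodes, colors $1,\dots,\ell,\ell-1,\dots,1,0$; $A^{(2)}_{2\ell}$: cycle with $2\ell+1$ nodes, colors $1,\dots,\ell,\ell-1,\dots,1,0,0$; $A^{(2)\dagger}_{2\ell}$: cycle with $2\ell+1$ nodes, colors $1,\dots,\ell,\ell,\ell-1,\dots,1,0$; $D^{(2)}_{\ell+1}$: cycle with $2\ell+2$ nodes, colors $1,\dots,\ell,\ell,\ell-1,\dots,1,0,0$; $B^{(1)}_\ell$: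 nodes $u_1,\dots,u_\ell,z,\bar u_\ell,\dots,\bar u_1$ with arrows $u_t\xrightarrow{t}u_{t+1}$, $\bar u_{t+1}\xrightarrow{t}\bar u_t$ ($1\le t\le\ell-1$), $u_\ell\xrightarrow{\ell}z\xrightarrow{\ell}\bar u_\ell$, $\bar u_1\xrightarrow{0}u_2$, $\bar u_2\xrightarrow{0}u_1$; $A^{(2)}_{2\ell-1}$: as for $B^{(1)}_\ell$ but without $z$, with a single arrow $u_\ell\xrightarrow{\ell}\bar u_\ell$; $D^{(1)}_\ell$: nodes $u_1,\dots,u_{\ell-1},v,v',\bar u_{\ell-1},\dots,\bar u_1$ with arrows $u_t\xrightarrow{t}u_{t+1}$, $\bar u_{t+1}\xrightarrow{t}\bar u_t$ ($1\le t\le\ell-2$), $u_{\ell-1}\xrightarrow{\ell-1}v\xrightarrow{\ell}\bar u_{\ell-1}$, $u_{\ell-1}\xrightarrow{\ell}v'\xrightarrow{\ell-1}\bar u_{\ell-1}$, $\bar u_1\xrightarrow{0}u_2$, $\bar u_2\xrightarrow{0}u_1$. A type $X_\ell$ path of length $k$ is a function $p:\{0,\dots,k-1\}\to I$ such that there is a directed walk in $B^{1,1}$ whose $t$-th step is a $p(t)$-colored arrow. *)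

(* Defs.v *)
From mathcomp Require Import all_boot.
Set Implicit Arguments. Unset Strict Implicit. Unset Printing Implicit Defensive.

Inductive aff_type :=
| A1
| C1
| A2even    (* A^(2)_{2l}, l >= 2 *)
| A2evendag (* A^(2)dagger_{2l}, l >= 2 *)
| D2        (* D^(2)_{l+1}, l >= 2 *)
| D1
| B1
| A2odd.    (* A^(2)_{2l-1}, l >= 3 *)

Definition valid_rank (X : aff_type) (l : nat) : bool :=
  match X with
  | D1 => 4 <= l
  | B1 | A2odd => 3 <= l
  | _ => 2 <= l
  end.

(* Nodes of B^{1,1}: Cyc i is the i-th node of a directed cycle;
   U t = u_t, Ubar t = \bar u_t, Z = z, V = v, V' = v'. *)
Inductive node :=
| Cyc of nat
| U of nat
| Ubar of nat
| Z
| V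
| V'.

Definition cycle_colors (X : aff_type) (l : nat) : seq nat :=
  match X with
  | A1 => iota 1 l ++ [:: 0]
  | C1 => iota 1 l ++ rev (iota 1 l.-1) ++ [:: 0]
  | A2even => iota 1 l ++ rev (iota 1 l.-1) ++ [:: 0; 0]
  | A2evendag => iota 1 l ++ [:: l] ++ rev (iota 1 l.-1) ++ [:: 0]
  | D2 => iota 1 l ++ [:: l] ++ rev (iota 1 l.-1) ++ [:: 0; 0]
  | _ => [::]
  end.

Definition cycle_arrow (cs : seq nat) (v : node) (c : nat) (w : node) : Prop :=
  exists i, i < size cs /\ v = Cyc i /\ c = nth 0 cs i /\ w = Cyc (i.+1 %% size cs).

Definition arrow (X : aff_type) (l : nat) (v : node) (c : nat) (w : node) : Prop :=
  match X with
  | A1 | C1 | A2even | A2evendag | D2 => cycle_arrow (cycle_colors X l) v c w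
  | B1 =>
      (exists t, 1 <= t <= l - 1 /\ v = U t /\ c = t /\ w = U t.+1)
   \/ (exists t, 1 <= t <= l - 1 /\ v = Ubar t.+1 /\ c = t /\ w = Ubar t)
   \/ (v = U l /\ c = l /\ w = Z)
   \/ (v = Z /\ c = l /\ w = Ubar l)
   \/ (v = Ubar 1 /\ c = 0 /\ w = U 2)
   \/ (v = Ubar 2 /\ c = 0 /\ w = U 1)
  | A2odd =>
      (exists t, 1 <= t <= l - 1 /\ v = U t /\ c = t /\ w = U t.+1)
   \/ (exists t, 1 <= t <= l - 1 /\ v = Ubar t.+1 /\ c = t /\ w = Ubar t)
   \/ (v = U l /\ c = l /\ w = Ubar l)
   \/ (v = Ubar 1 /\ c = 0 /\ w = U 2)
   \/ (v = Ubar 2 /\ c = 0 /\ w = U 1)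
  | D1 =>
      (exists t, 1 <= t <= l - 2 /\ v = U t /\ c = t /\ w = U t.+1)
   \/ (exists t, 1 <= t <= l - 2 /\ v = Ubar t.+1 /\ c = t /\ w = Ubar t)
   \/ (v = U (l - 1) /\ c = l - 1 /\ w = V)
   \/ (v = V /\ c = l /\ w = Ubar (l - 1))
   \/ (v = U (l - 1) /\ c = l /\ w = V')
   \/ (v = V' /\ c = l - 1 /\ w = Ubar (l - 1))
   \/ (v = Ubar 1 /\ c = 0 /\ w = U 2)
   \/ (v = Ubar 2 /\ c = 0 /\ w = U 1)
  end.

(* A directed walk with k steps following p : {0..k-1} -> I = {0..l}, encoded
   by its k+1 visited nodes ws; step t is the arrow ws_t --p(t)--> ws_{t+1}.
   (B^{1,1} has no two parallel arrows of the same colour, so a walk is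
   determined by its node sequence together with p.) *)
Definition walk_for (X : aff_type) (l k : nat) (p : 'I_k -> 'I_l.+1)
    (ws : seq node) : Prop :=
  size ws = k.+1 /\
  forall t : 'I_k, arrow X l (nth Z ws t) (val (p t)) (nth Z ws t.+1).

Arguments walk_for X l k p ws : clear implicits.

Definition is_path (X : aff_type) (l k : nat) (p : 'I_k -> 'I_l.+1) : Prop :=
  exists ws, walk_for X l k p ws.

Arguments is_path X l k p : clear implicits.

(* Main.v *)
Require Import Defs.
From mathcomp Require Import all_boot zify.


Set Implicit Arguments.
Section G.
Variable R : node -> nat -> node -> Prop.
Hypothesis Hf : forall v c w w', R v c w -> R v c w' -> w = w'.
Hypothesis Hb : forall v v' c w, R v c w -> R v' c w -> v = v'.
Hypothesis Hm : forall v v' w w' x x' c d,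
  R v c w -> R w d x -> R v' c w' -> R w' d x' -> w = w'.

Lemma uniq_walk k (f : 'I_k -> nat) (ws ws' : seq node) : 1 < k ->
  size ws = k.+1 -> size ws' = k.+1 ->
  (forall t : 'I_k, R (nth Z ws t) (f t) (nth Z ws t.+1)) ->
  (forall t : 'I_k, R (nth Z ws' t) (f t) (nth Z ws' t.+1)) ->
  ws = ws'.
Proof.
move=> hk s1 s2 h1 h2.
have mid : forall i, 0 < i < k -> nth Z ws i = nth Z ws' i.
  move=> [|i] //= hi.
  have hi' : i < k by lia.
  exact: (Hm (h1 (Ordinal hi')) (h1 (Ordinal hi)) (h2 (Ordinal hi')) (h2 (Ordinal hi))).
apply: (@eq_from_nth _ Z); first by rewrite s1 s2.
rewrite s1 => i hi.
case: i hi => [|i] hi.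
  have h0 : 0 < k by lia.
  have := h2 (Ordinal h0). rewrite /= -(mid 1); last lia.
  exact: (Hb (h1 (Ordinal h0))).
have [lt|ge] := ltnP i.+1 k; first by apply: mid; lia.
have -> : i = k.-1 by lia.
have hk1 : k.-1 < k by lia.
have := h2 (Ordinal hk1). rewrite /= -(mid k.-1); last lia.
move=> H. have e : k.-1.+1 = k by lia. rewrite e.
have := Hf (h1 (Ordinal hk1)) H. by rewrite /= e.
Qed.
End G.
Unset Implicit Arguments.

Ltac clean := repeat match goal with
 | H : exists _, _ |- _ => destruct H
 | H : _ /\ _ |- _ => destruct H
 | H : is_true (_ && _) |- _ => move/andP: H => [? ?]
 | H : U _ = U _ |- _ => injection H; clear H; intro H
 | H : Ubar _ = Ubar _ |- _ => injection H; clear H; intro H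
 | H : ?x = ?y |- _ => is_var x; subst x
 | H : ?x = ?y |- _ => is_var y; subst y
 end; try discriminate; try (exfalso; lia).

Ltac dsj H := repeat (destruct H as [H|H]); clean.

Lemma fwd X l v c w w' : (X = B1 \/ X = A2odd \/ X = D1) -> valid_rank X l ->
  arrow X l v c w -> arrow X l v c w' -> w = w'.
Proof.
move=> [->|[->|->]] /= hl H1 H2; dsj H1; dsj H2; (reflexivity || (f_equal; lia)).
Qed.

Lemma bwd X l v v' c w : (X = B1 \/ X = A2odd \/ X = D1) -> valid_rank X l ->
  arrow X l v c w -> arrow X l v' c w -> v = v'.
Proof.
move=> [->|[->|->]] /= hl H1 H2; dsj H1; dsj H2; (reflexivity || (f_equal; lia)).
Qed.

Lemma midl X l v v' w w' x x' c d : (X = B1 \/ X = A2odd \/ X = D1) -> valid_rank X l ->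
  arrow X l v c w -> arrow X l w d x -> arrow X l v' c w' -> arrow X l w' d x' -> w = w'.
Proof.
move=> [->|[->|->]] /= hl H1 H2 H3 H4; dsj H1; dsj H2; dsj H3; dsj H4; (reflexivity || (f_equal; lia)).
Qed.

Definition fcol (X : aff_type) (l i : nat) : nat :=
  match X with
  | A1 => if i < l then i.+1 else 0
  | C1 | A2even => if i < l then i.+1 else if i < 2*l-1 then 2*l-1-i else 0
  | A2evendag | D2 => if i < l then i.+1 else if i == l then l else if i < 2*l then 2*l-i else 0
  | _ => 0
  end.

Lemma size_cc X l : 0 < l -> size (cycle_colors X l) =
  match X with A1 => l.+1 | C1 => 2*l | A2even | A2evendag => (2*l).+1 | D2 => (2*l).+2 | _ => 0 end.
Proof. move=> hl; case: X => //=; rewrite !size_cat /= ?size_cat ?size_rev ?size_iota /=; lia. Qed.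

Lemma nth_consE (a : nat) s n : nth 0 (a :: s) n = if n == 0 then a else nth 0 s n.-1.
Proof. by case: n. Qed.

Lemma nth_cc X l i : 1 < l -> i < size (cycle_colors X l) -> nth 0 (cycle_colors X l) i = fcol X l i.
Proof.
move=> hl; rewrite size_cc; last lia. case: X => //= hi;
rewrite ?nth_cat ?nth_consE ?size_cat ?size_rev ?size_iota /=;
do 3 (repeat (case: ifP => ?); rewrite ?nth_consE ?nth_nil ?nth_iota ?size_rev ?size_iota //=; try lia;
  rewrite ?nth_cat ?size_rev ?size_iota; try (rewrite nth_rev ?size_iota; last lia)).
Qed.

Lemma modS i n : i < n -> i.+1 %% n = if i.+1 < n then i.+1 else 0.
Proof.
move=> h; case: ifP => h2; first by rewrite modn_small.
have -> : i.+1 = n by lia. by rewrite modnn.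
Qed.

Definition isCyc X := X = A1 \/ X = C1 \/ X = A2even \/ X = A2evendag \/ X = D2.

Lemma cfwd X l v c w w' : isCyc X ->
  arrow X l v c w -> arrow X l v c w' -> w = w'.
Proof.
move=> hX.
have E : arrow X l = cycle_arrow (cycle_colors X l) by case: hX => [->|[->|[->|[->|->]]]].
rewrite E => -[i [hi [-> [-> ->]]]] [j [hj [[<-] [_ ->]]]] //.
Qed.

Lemma cbwd X l v v' c w : isCyc X ->
  arrow X l v c w -> arrow X l v' c w -> v = v'.
Proof.
move=> hX.
have E : arrow X l = cycle_arrow (cycle_colors X l) by case: hX => [->|[->|[->|[->|->]]]].
rewrite E => -[i [hi [-> [-> ->]]]] [j [hj [-> [_ [e]]]]].
move: e; rewrite !modS //; case: ifP; case: ifP => ? ? ?; f_equal; lia.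
Qed.

Lemma cmid X l v v' w w' x x' c d : isCyc X -> valid_rank X l ->
  arrow X l v c w -> arrow X l w d x -> arrow X l v' c w' -> arrow X l w' d x' -> w = w'.
Proof.
move=> hX hl.
have E : arrow X l = cycle_arrow (cycle_colors X l) by case: hX => [->|[->|[->|[->|->]]]].
have hl2 : 1 < l by case: hX hl => [->|[->|[->|[->|->]]]].
rewrite E => -[i [hi [? [? ?]]]] [i2 [hi2 [e2 [? ?]]]] [j [hj [? [ec ?]]]] [j2 [hj2 [e3 [ed ?]]]].
subst. case: e2 => e2; case: e3 => e3. subst.
move: ec ed. rewrite !nth_cc //.
rewrite !modS //.
case: (ltnP i.+1 (size (cycle_colors X l))) => h1;
case: (ltnP j.+1 (size (cycle_colors X l))) => h2 /=;
move: hi hj h1 h2 {hi2 hj2}; rewrite !size_cc; try lia;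
case: hX => [->|[->|[->|[->|->]]]] /= hi hj h1 h2;
repeat (case: ifP => ?); try (move=> *; exfalso; lia); move=> *; f_equal; lia.
Qed.

Theorem mainTheorem4 (X : aff_type) (l k : nat) (p : 'I_k -> 'I_l.+1) :
  valid_rank X l -> 1 < k -> is_path X l k p ->
  exists! ws : seq node, walk_for X l k p ws.
Proof.
move=> hl hk [ws hws]; exists ws; split => // ws' hws'.
case: hws => s1 h1; case: hws' => s2 h2.
have hX : isCyc X \/ (X = B1 \/ X = A2odd \/ X = D1)
  by case: X hl {h1 h2} => /=; rewrite /isCyc; tauto.
apply: (@uniq_walk (arrow X l) _ _ _ k (fun t => val (p t))) => //.
- by move=> v c w w'; case: hX => hX; [apply: cfwd | apply: fwd].
- by move=> v v' c w; case: hX => hX; [apply: cbwd | apply: bwd].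
- by move=> v v' w w' x x' c d; case: hX => hX; [apply: cmid | apply: midl].
Qed.
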